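(* Let $z\in\mathbb C\setminus\{0\}$, $\nu\in\mathrm{FA}(\partial\mathbb T)$ and $\gamma\in\mathrm{Aut}(\mathbb T)$. Then $\pi_z(\gamma)\nu=\nu$ if and only if $$z^{d(o,\iota(e))}\,\nu(\partial e)=z^{d(o,\iota(\gamma e))}\,\nu(\partial(\gamma e))$$ for every oriented edge $e$ of $\mathbb T$ that points away from $o$ and away from $\gamma^{-1}o$.
   Context: $\mathbb T$ is a locally finite tree without vertices of degree $\le1$, with graph metric $d$ on vertices and a fixed base vertex $o$. For an oriented edge $e$ with initial vertex $\iota(e)$ and terminal vertex $\tau(e)$, $e$ points away from a vertex $x$ if $d(x,\tau(e))=d(x,\iota(e))+1$. $\partial\mathbb T$ is the set of ends of $\mathbb T$ (equivalence classes of geodesic rays, two rays being equivalent if they share infinitely many edges); for every vertex $x$ and end $\omega$ there is a unique geodesic ray from $x$ to $\omega$. The forward set $\partial e\subseteq\partial\mathbb T$ of an oriented edge $e$ consists of the ends $\omega$ whose ray from $\iota(e)$ starts with $e$; forward sets form a basis of compact open sets of a compact totally disconnected topology on $\partial\mathbb T$. $\mathrm{FA}(\partial\mathbb T)$ is the space of finitely additive complex-valued set functions on the clopen subsets of $\partial\mathbb T$; a locally constant $g$ can be integrated: $\int_Ag\,d\nu=\sum_ig_i\nu(A_i)$ for a finite clopen partition $A=\bigsqcup A_i$ with $g\equiv g_i$ on $A_i$. For an end $\omega$ and vertices $x,y$, $h_\omega(x,y):=d(x,w)-d(y,w)$ for any vertex $w$ lying on both rays from $x$ and from $y$ to $\omega$.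 $\mathrm{Aut}(\mathbb T)$ acts on ends, and on $\mathrm{FA}(\partial\mathbb T)$ by $(\gamma\nu)(A)=\nu(\gamma^{-1}A)$. The twisted action is $(\pi_z(\gamma)\nu)(A):=\int_A c_\gamma\,d(\gamma\nu)$, where $c_\gamma(\omega)=z^{h_\omega(\gamma o,\,o)}$ (a locally constant function). *)

(* Defs.v *)
From HB Require Import structures.
From mathcomp Require Import all_boot all_order all_algebra.
From mathcomp Require Import boolp classical_sets.
From mathcomp Require Import Rstruct.
From mathcomp Require Import complex.
From Stdlib Require Import ClassicalEpsilon.
From Stdlib Require Reals.

Unset Strict Implicit.
Unset Printing Implicit Defensive.

Import Order.TTheory GRing.Theory Num.Theory.
Local Open Scope classical_set_scope.
Local Open Scope ring_scope.

Notation CC := (complex Rdefinitions.R).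

(* A graph on the vertex type [V] is given by an adjacency relation [adj].
   A walk from [x] is [x :: p] with [path adj x p]; it ends at [last x p]
   and has length [size p]. *)

Definition walk_of_length {V : eqType} (adj : rel V) (x y : V) (n : nat) : Prop :=
  exists p : seq V, [/\ path adj x p, last x p = y & size p = n].

Definition gdist {V : eqType} (adj : rel V) (x y : V) : nat :=
  xget 0%N [set n | walk_of_length adj x y n /\
                    forall m, walk_of_length adj x y m -> (n <= m)%N].

Definition simple_graph {V : eqType} (adj : rel V) : Prop :=
  (forall x y, adj x y = adj y x) /\ (forall x, ~~ adj x x).

Definition connected_graph {V : eqType} (adj : rel V) : Prop :=
  forall x y : V, exists p : seq V, path adj x p /\ last x p = y.

(* No cycles: there is no closed walk x, v1, ..., v_{n-1}, x with n >= 3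
   and x, v1, ..., v_{n-1} pairwise distinct. *)
Definition acyclic_graph {V : eqType} (adj : rel V) : Prop :=
  forall (x : V) (p : seq V),
    path adj x p -> last x p = x -> (3 <= size p)%N -> ~~ uniq p.

Definition is_tree {V : eqType} (adj : rel V) : Prop :=
  [/\ simple_graph adj, connected_graph adj & acyclic_graph adj].

Definition locally_finite {V : eqType} (adj : rel V) : Prop :=
  forall x : V, exists s : seq V, forall y, adj x y -> y \in s.

Definition no_leaves {V : eqType} (adj : rel V) : Prop :=
  forall x : V, exists y1 y2 : V, [/\ adj x y1, adj x y2 & y1 != y2].

(* An oriented edge is a pair e = (iota e, tau e) with adj e.1 e.2. *)
Definition oedge {V : eqType} (adj : rel V) (e : V * V) : Prop := adj e.1 e.2.

Definition points_away {V : eqType} (adj : rel V) (x : V) (e : V * V) : Prop :=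
  gdist adj x e.2 = (gdist adj x e.1).+1.

Definition is_aut {V : eqType} (adj : rel V) (g ginv : V -> V) : Prop :=
  [/\ cancel g ginv, cancel ginv g & forall x y, adj (g x) (g y) = adj x y].

Definition edge_act {V : eqType} (g : V -> V) (e : V * V) : V * V := (g e.1, g e.2).

Definition geod_ray {V : eqType} (adj : rel V) (r : nat -> V) : Prop :=
  forall i k : nat, gdist adj (r i) (r (i + k)%N) = k.

Definition edge_of_ray {V : eqType} (r' : nat -> V) (a b : V) : Prop :=
  exists m, (r' m = a /\ r' m.+1 = b) \/ (r' m = b /\ r' m.+1 = a).

Definition ray_equiv {V : eqType} (r r' : nat -> V) : Prop :=
  forall N : nat, exists n, (N <= n)%N /\ edge_of_ray r' (r n) (r n.+1).

Definition is_end {V : eqType} (adj : rel V) (E : set (nat -> V)) : Prop :=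
  exists r, geod_ray adj r /\ E = [set r' | geod_ray adj r' /\ ray_equiv r r'].

Definition End {V : eqType} (adj : rel V) : Type := {E : set (nat -> V) | is_end adj E}.

(* the ray from vertex x to the end w (unique) *)
Definition ray_to {V : eqType} {adj : rel V} (w : End adj) (x : V) (r : nat -> V) :=
  proj1_sig w r /\ r 0%N = x.

Definition fwd {V : eqType} (adj : rel V) (e : V * V) : set (End adj) :=
  [set w | exists r, ray_to w e.1 r /\ r 1%N = e.2].

(* the topology on the ends generated by the basis of forward sets *)
Definition end_open {V : eqType} {adj : rel V} (U : set (End adj)) : Prop :=
  forall w, U w -> exists e, [/\ oedge adj e, fwd adj e w & fwd adj e `<=` U].

Definition end_clopen {V : eqType} {adj : rel V} (U : set (End adj)) : Prop :=
  end_open U /\ end_open (~` U).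

(* action of an automorphism on ends, through preimages:
   g^-1 A = [set w | g w \in A], where g w is the class of g o r, r in w *)
Definition end_preim {V : eqType} {adj : rel V} (g : V -> V) (A : set (End adj))
  : set (End adj) :=
  [set w : End adj | exists w' : End adj, A w' /\ exists r : nat -> V, proj1_sig w r /\ proj1_sig w' (g \o r)].

(* Busemann / horofunction h_w(x, y) = d(x, v) - d(y, v) for any vertex v on
   both rays from x and from y to w *)
Definition on_both_rays {V : eqType} {adj : rel V} (w : End adj) (x y v : V) : Prop :=
  exists r r', [/\ ray_to w x r, ray_to w y r' & exists i j, r i = v /\ r' j = v].

Definition horo {V : eqType} {adj : rel V} (w : End adj) (x y : V) : int :=
  let v := epsilon (inhabits x) (on_both_rays w x y) in
  (gdist adj x v)%:Z - (gdist adj y v)%:Z.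

(* complex set functions on the clopen sets (values on other sets are irrelevant) *)
Definition is_FA {V : eqType} {adj : rel V} (nu : set (End adj) -> CC) : Prop :=
  forall A B, end_clopen A -> end_clopen B -> A `&` B = set0 ->
    nu (A `|` B) = nu A + nu B.

Definition fa_act {V : eqType} {adj : rel V} (g : V -> V) (nu : set (End adj) -> CC)
  : set (End adj) -> CC := fun A => nu (end_preim g A).

(* a finite clopen partition A = disjoint union of P i, with f constant = c i on P i *)
Definition lc_partition {V : eqType} {adj : rel V} (f : End adj -> CC) (A : set (End adj))
  (t : {n : nat & (('I_n -> set (End adj)) * ('I_n -> CC))%type}) : Prop :=
  let P := (projT2 t).1 in let c := (projT2 t).2 in
  [/\ forall i, end_clopen (P i),
      forall i j, i != j -> P i `&` P j = set0,
      forall w, A w <-> exists i, P i w &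
      forall i w, P i w -> f w = c i].

Definition fa_integral {V : eqType} {adj : rel V} (nu : set (End adj) -> CC)
  (f : End adj -> CC) (A : set (End adj)) : CC :=
  let t := epsilon
      (inhabits (existT (fun n => (('I_n -> set (End adj)) * ('I_n -> CC))%type) 0%N
                        (fun _ => set0, fun _ => 0)))
      (lc_partition f A) in
  \sum_(i < projT1 t) (projT2 t).2 i * nu ((projT2 t).1 i).

Definition cocycle {V : eqType} (adj : rel V) (o : V) (z : CC) (g : V -> V)
  : End adj -> CC := fun w => z ^ (horo w (g o) o).

Definition pi_z {V : eqType} {adj : rel V} (o : V) (z : CC) (g : V -> V)
  (nu : set (End adj) -> CC) : set (End adj) -> CC :=
  fun A => fa_integral (fa_act g nu) (cocycle adj o z g) A.

(* Main.v *)
Require Import Defs.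
From HB Require Import structures.
From mathcomp Require Import all_boot all_order all_algebra.
From mathcomp Require Import boolp classical_sets.
From mathcomp Require Import Rstruct complex.
From mathcomp Require Import zify.
From Stdlib Require Import ClassicalEpsilon.

Import Order.TTheory GRing.Theory Num.Theory.
Local Open Scope classical_set_scope.
Local Open Scope ring_scope.


Import Order.TTheory GRing.Theory Num.Theory.
Local Open Scope classical_set_scope.
Local Open Scope nat_scope.
Set Implicit Arguments.
Unset Printing Implicit Defensive.

Section Tree.
Variables (V : eqType) (adj : rel V).
Hypothesis Htree : is_tree adj.
Local Notation d := (gdist adj).

Definition fwalk (p : nat -> V) (n : nat) := forall i, i < n -> adj (p i) (p i.+1).

Lemma adj_sym x y : adj x y = adj y x.
Proof. by case: Htree => [[]]. Qed.
Lemma adj_irr x : ~~ adj x x.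
Proof. by case: Htree => [[]]. Qed.
Lemma adj_neq x y : adj x y -> x != y.
Proof. by move=> h; apply/eqP=> e; move: h; rewrite e (negbTE (adj_irr y)). Qed.

Lemma walkP x y n : walk_of_length adj x y n <->
  exists p, [/\ p 0 = x, p n = y & fwalk p n].
Proof.
split.
  case=> s [hp hl hs]; exists (fun i => nth x (x :: s) i); split => //.
    by rewrite -hs -last_nth.
  move=> i hi; move/(pathP x): hp => /(_ i); rewrite hs => /(_ hi) //.
case=> p [h0 hn hw]; exists (mkseq (fun i => p i.+1) n); split.
- apply/(pathP x) => i; rewrite size_mkseq => hi.
  rewrite nth_mkseq //=; case: i hi => [|i] hi /=; first by rewrite -h0; exact: hw.
  rewrite nth_mkseq; last by lia. exact: hw.
- rewrite (last_nth x) size_mkseq; case: n hn hw => [|n] hn hw /=; first by rewrite -hn.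
  by rewrite nth_mkseq.
- by rewrite size_mkseq.
Qed.

Lemma min_ex (P : nat -> Prop) : (exists n, P n) -> exists n, P n /\ forall m, P m -> n <= m.
Proof.
move=> h.
have h' : exists n, `[< P n >] by case: h => n hn; exists n; apply/asboolP.
exists (ex_minn h'); case: ex_minnP => m /asboolP hm hmin; split => // k hk.
by apply: hmin; apply/asboolP.
Qed.

Lemma gdist_spec x y : walk_of_length adj x y (d x y) /\
   forall m, walk_of_length adj x y m -> d x y <= m.
Proof.
rewrite /gdist; set S := [set n | _].
suff : exists n, S n by move=> /(xgetPex 0).
apply: min_ex; case: Htree => _ /(_ x y) [p [hp hl]] _.
by exists (size p); exists p.
Qed.

Lemma dW p n : fwalk p n -> d (p 0) (p n) <= n.
Proof. move=> h; apply: (proj2 (gdist_spec _ _)); apply/walkP; by exists p. Qed.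

Lemma dE x y : exists p, [/\ p 0 = x, p (d x y) = y & fwalk p (d x y)].
Proof. by apply/walkP; case: (gdist_spec x y). Qed.

Definition catf (p q : nat -> V) (m : nat) i := if i <= m then p i else q (i - m).

Lemma catf_walk p q m n : fwalk p m -> fwalk q n -> p m = q 0 -> fwalk (catf p q m) (m + n).
Proof.
move=> hp hq e i hi; rewrite /catf.
case: (ltnP i m) => him.
  by rewrite (ltnW him); apply: hp.
case: (leqP i m) => him2.
  have -> : i = m by lia.
  by rewrite e subSn // subnn; apply: hq; lia.
rewrite subSn; last by lia.
by apply: hq; lia.
Qed.

Lemma catf0 p q m : catf p q m 0 = p 0.
Proof. by []. Qed.
Lemma catf_end p q m n : p m = q 0 -> catf p q m (m + n) = q n.
Proof.
move=> e; rewrite /catf; case: leqP => h.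
  have h0 : n = 0 by lia.
  by rewrite h0 addn0 e.
by rewrite addKn.
Qed.

Lemma d_tri x y z : d x z <= d x y + d y z.
Proof.
case: (dE x y) => p [p0 pn pw]; case: (dE y z) => q [q0 qn qw].
have e : p (d x y) = q 0 by rewrite pn q0.
have := dW (catf_walk pw qw e).
by rewrite catf0 catf_end // p0 qn.
Qed.

Lemma d_sym x y : d x y = d y x.
Proof.
suff h : forall x y, d y x <= d x y by apply/eqP; rewrite eqn_leq !h.
move=> {}x {}y; case: (dE x y) => p [p0 pn pw].
have hw : fwalk (fun i => p (d x y - i)) (d x y).
  move=> i hi; rewrite adj_sym; have -> : d x y - i = (d x y - i.+1).+1 by lia.
  apply: pw; lia.
by have := dW hw; rewrite subn0 pn subnn p0.
Qed.

Lemma d_refl x : d x x = 0.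
Proof.
apply/eqP; rewrite -leqn0; have := dW (p:=fun _ => x) (n:=0).
by apply => i.
Qed.

Lemma d0 x y : d x y = 0 -> x = y.
Proof.
move=> h; case: (dE x y) => p [p0 pn pw].
by move: pn; rewrite h => pn; rewrite -pn -p0.
Qed.

Lemma d_adj x y : adj x y -> d x y = 1.
Proof.
move=> h; apply/eqP; rewrite eqn_leq; apply/andP; split.
  have hw : fwalk (fun i => if i is 0 then x else y) 1 by case.
  by have := dW hw.
rewrite lt0n; apply/eqP => /d0 e; by move: (adj_neq h); rewrite e eqxx.
Qed.

Lemma d1_adj x y : d x y = 1 -> adj x y.
Proof.
move=> h; case: (dE x y) => p [p0 pn pw].
move: pn pw; rewrite h => pn pw; rewrite -p0 -pn; exact: (pw 0).
Qed.

Lemma d_step x y y' : adj y y' -> d x y' <= (d x y).+1.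
Proof. move=> h; have := d_tri x y y'; by rewrite (d_adj h) addn1. Qed.


Definition geo x (p : nat -> V) n := [/\ p 0 = x, fwalk p n & forall i, i <= n -> d x (p i) = i].

Lemma fwalk_shift p n i : fwalk p n -> fwalk (fun j => p (i + j)) (n - i).
Proof. move=> h j hj; rewrite addnS; apply: h; lia. Qed.

Lemma fwalk_le p n m : fwalk p n -> m <= n -> fwalk p m.
Proof. move=> h hm j hj; apply: h; lia. Qed.

Lemma dW' p n i j : fwalk p n -> i <= j -> j <= n -> d (p i) (p j) <= j - i.
Proof.
move=> h hij hjn; have := dW (fwalk_shift i (@fwalk_le p n j h hjn)).
by rewrite addn0 subnKC.
Qed.

Lemma geo_ex x y : exists p, geo x p (d x y) /\ p (d x y) = y.
Proof.
case: (dE x y) => p [p0 pn pw]; exists p; split => //; split => // i hi.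
apply/eqP; rewrite eqn_leq; apply/andP; split.
  by have := dW' 0 i pw (leq0n i) hi; rewrite p0 subn0.
have h1 := d_tri x (p i) y.
have h2 := dW' i (d x y) pw hi (leqnn _); rewrite pn in h2.
lia.
Qed.

Lemma geo_seg x p n {i j} : geo x p n -> i <= j -> j <= n -> d (p i) (p j) = j - i.
Proof.
case=> p0 pw pd hij hjn; apply/eqP; rewrite eqn_leq (dW' i j pw hij hjn) /=.
have := d_tri x (p i) (p j); rewrite !pd //; [lia | lia].
Qed.

Lemma geo_le x p n m : geo x p n -> m <= n -> geo x p m.
Proof. case=> p0 pw pd hm; split => //; [exact: (@fwalk_le p n m pw hm) | move=> i hi; apply: pd; lia]. Qed.

Lemma acyc x (c : nat -> V) S : c 0 = x -> c S = x -> fwalk c S -> 3 <= S ->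
  {in gtn S &, injective (fun i => c i.+1)} -> False.
Proof.
move=> c0 cS cw hS hinj.
have hl : last x (mkseq (fun i => c i.+1) S) = x.
  rewrite (last_nth x) size_mkseq; move: cS hS; case: S {cw hinj} => [|S] cS hS //=.
  by rewrite nth_mkseq.
case: Htree => _ _ /(_ x (mkseq (fun i => c i.+1) S)) h.
have hp : path adj x (mkseq (fun i => c i.+1) S).
  apply/(pathP x) => i; rewrite size_mkseq => hi.
  rewrite nth_mkseq //=; case: i hi => [|i] hi /=; first by rewrite -c0; exact: cw.
  rewrite nth_mkseq; last by lia. exact: cw.
have := h hp hl; rewrite size_mkseq => /(_ hS); by rewrite (introT (mkseq_uniqP _ _) hinj).
Qed.

Lemma cyc x p q M L j : geo x p M -> geo x q L -> L <= M -> 1 <= j -> j <= L ->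
  p j.-1 = q j.-1 -> adj (p M) (q L) -> (forall i, j <= i -> i <= L -> p i != q i) -> False.
Proof.
move=> [p0 pw pd] [q0 qw qd] hLM hj1 hjL ej ha hne.
pose c k := if k <= M - j + 1 then p (j.-1 + k) else q (L - (k - (M - j + 2))).
pose S := M + L - 2 * j + 3.
apply: (@acyc (p j.-1) c S).
- by rewrite /c leq0n addn0.
- rewrite /c /S ifN; last by rewrite -ltnNge; lia.
  rewrite ej; congr q; lia.
- move=> k hk; rewrite /c.
  case: (ltnP k (M - j + 1)) => h1.
    rewrite (ltnW h1) addnS; apply: pw; lia.
  case: (leqP k (M - j + 1)) => h2.
    have hk' : k = M - j + 1 by lia.
    rewrite hk'.
    have -> : j.-1 + (M - j + 1) = M by lia.
    by have -> : L - ((M - j + 1).+1 - (M - j + 2)) = L by lia.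
  rewrite adj_sym.
  have -> : L - (k - (M - j + 2)) = (L - (k.+1 - (M - j + 2))).+1 by lia.
  apply: qw; lia.
- rewrite /S; lia.
- have dc : forall k, k <= S -> d x (c k) = if k <= M - j + 1 then j.-1 + k else L - (k - (M - j + 2)).
    move=> k hk; rewrite /c; case: ifP => h; [apply: pd | apply: qd]; lia.
  move=> a b; rewrite !inE => ia ib e.
  have e2 : d x (c a.+1) = d x (c b.+1) by rewrite e.
  rewrite !dc in e2; [|lia|lia].
  move: e; rewrite /c.
  case: ifP e2 => h1; case: ifP => h2 e2 e; try lia.
  + have hi : L - (b.+1 - (M - j + 2)) = j.-1 + a.+1 by lia.
    have H1 : j <= j.-1 + a.+1 by lia.
    have H2 : j.-1 + a.+1 <= L by lia.
    by move: (hne _ H1 H2); rewrite e -hi eqxx.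
  + have hi : L - (a.+1 - (M - j + 2)) = j.-1 + b.+1 by lia.
    have H1 : j <= j.-1 + b.+1 by lia.
    have H2 : j.-1 + b.+1 <= L by lia.
    by move: (hne _ H1 H2); rewrite -e -hi eqxx.
Qed.

Lemma last_eq (P : nat -> bool) n : P 0 -> exists k, [/\ k <= n, P k & forall i, k < i -> i <= n -> ~~ P i].
Proof.
move=> h0; elim: n => [|n [k [hk hPk hi]]]; first by exists 0; split => // i hi1 hi2; lia.
case hn : (P n.+1).
  by exists n.+1; split => // i h1 h2; lia.
exists k; split => //; first lia.
move=> i h1 h2; case: (ltnP i n.+1) => h3; first by apply: hi; lia.
have ei : i = n.+1 by lia.
by rewrite ei hn.
Qed.

Lemma T3 x n p q : geo x p n -> geo x q n -> p n = q n -> forall i, i <= n -> p i = q i.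
Proof.
elim: n p q => [|n IH] p q gp gq e i hi.
  have -> : i = 0 by lia. by case: gp => ->; case: gq => ->.
case: (ltnP i n.+1) => hin; last by have -> : i = n.+1 by lia.
suff en : p n = q n by apply: IH => //; [apply: (geo_le _ gp) | apply: (geo_le _ gq)]; lia.
case: (eqVneq (p n) (q n)) => // hne; exfalso.
have h0 : p 0 == q 0 by case: gp => -> _ _; case: gq => -> _ _.
have [k [hk hPk hk2]] := @last_eq (fun i => p i == q i) n h0.
have hkn : k < n by case: ltngtP hk => // ek; move: hPk; rewrite ek (negbTE hne).
apply: (@cyc x p q n.+1 n k.+1 gp (geo_le n gq (leqnSn n))) => //.
- by apply/eqP.
- rewrite e adj_sym; case: gq => _ qw _; exact: qw.
Qed.

Lemma P0 x u v : adj u v -> d x u != d x v.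
Proof.
move=> h; apply/eqP => e.
case: (geo_ex x u) => p [gp pn]; case: (geo_ex x v) => q [gq qn].
rewrite e in gp pn.
have h0 : p 0 == q 0 by case: gp => -> _ _; case: gq => -> _ _.
have [k [hk hPk hk2]] := @last_eq (fun i => p i == q i) (d x v) h0.
have hkn : k < d x v.
  case: ltngtP hk => // ek; move: hPk; rewrite ek pn qn => /eqP euv.
  by move: h; rewrite euv (negbTE (adj_irr v)).
apply: (@cyc x p q (d x v) (d x v) k.+1 gp gq) => //.
- by apply/eqP.
- by rewrite pn qn.
Qed.

Lemma pm1 x u v : adj u v -> d x v = (d x u).+1 \/ d x u = (d x v).+1.
Proof.
move=> h; have h1 := d_step x h; rewrite adj_sym in h; have h2 := d_step x h.
have := P0 x h; lia.
Qed.

Lemma geo_ext x p n v : geo x p n -> adj (p n) v -> d x v = n.+1 ->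
  geo x (fun i => if i <= n then p i else v) n.+1.
Proof.
case=> p0 pw pd ha hv; split => //.
  move=> i hi; case: (ltnP i n) => h.
    by rewrite (ltnW h); apply: pw.
  have -> : i = n by lia. by rewrite leqnn.
move=> i hi; case: leqP => h; first by apply: pd.
by have -> : i = n.+1 by lia.
Qed.

Lemma par_uniq x u u' v : adj u v -> adj u' v -> d x v = (d x u).+1 -> d x v = (d x u').+1 -> u = u'.
Proof.
move=> h h' e e'.
case: (geo_ex x u) => p [gp pn]; case: (geo_ex x u') => q [gq qn].
have eu : d x u' = d x u by lia.
rewrite eu in gq qn.
have a1 : adj (p (d x u)) v by rewrite pn.
have a2 : adj (q (d x u)) v by rewrite qn.
have gp' := geo_ext gp a1 e.
have gq' := geo_ext gq a2 e.
have := T3 gp' gq' _ (d x u) (leqnSn _).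
by rewrite !leqnn ltnn pn qn; apply.
Qed.

Lemma Inc x r n i : fwalk r n -> (forall k, k.+2 <= n -> r k.+2 != r k) ->
  i < n -> d x (r i.+1) = (d x (r i)).+1 ->
  forall k, i + k <= n -> d x (r (i + k)) = d x (r i) + k.
Proof.
move=> rw nb hi e.
have step : forall k, i + k < n -> d x (r (i + k).+1) = (d x (r (i + k))).+1.
  elim=> [|k IH] hk; first by rewrite addn0.
  have a1 : adj (r (i + k)) (r (i + k).+1) by apply: rw; lia.
  have a2 : adj (r (i + k).+1) (r (i + k).+2) by apply: rw; lia.
  have ek := IH ltac:(lia).
  rewrite addnS.
  case: (pm1 x a2) => h; first by [].
  exfalso.
  have a2' : adj (r (i + k).+2) (r (i + k).+1) by rewrite adj_sym.
  have := par_uniq x a2' a1 h ek.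
  by move=> eq; move: (nb (i + k) ltac:(lia)); rewrite eq eqxx.
elim=> [|k IH] hk; first by rewrite !addn0.
rewrite addnS step; last by lia.
rewrite IH; lia.
Qed.


Definition sh (k : nat) (r : nat -> V) := fun n => r (k + n).

Lemma ray_d r {i j} : geod_ray adj r -> i <= j -> d (r i) (r j) = j - i.
Proof. by move=> h hij; rewrite -(subnKC hij) h addKn. Qed.

Lemma ray_walk r i : geod_ray adj r -> adj (r i) (r i.+1).
Proof. by move=> h; apply: d1_adj; rewrite -addn1 h. Qed.

Lemma ray_nb r i : geod_ray adj r -> r i.+2 != r i.
Proof.
move=> h; apply/eqP => e; have := h i 2; rewrite addn2 e d_refl //.
Qed.

Lemma ray_inj r {i j} : geod_ray adj r -> r i = r j -> i = j.
Proof.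
move=> h e; case: (leqP i j) => hij.
  have := ray_d h hij; rewrite e d_refl; lia.
have := ray_d h (ltnW hij); rewrite e d_refl; lia.
Qed.

Lemma ray_fwalk r n : geod_ray adj r -> fwalk r n.
Proof. by move=> h i _; apply: ray_walk. Qed.

Lemma ray_geo r n : geod_ray adj r -> geo (r 0) r n.
Proof. by move=> h; split => // [|i _]; [apply: ray_fwalk | rewrite -{2}(add0n i) h]. Qed.

Lemma sh_ray k r : geod_ray adj r -> geod_ray adj (sh k r).
Proof. by move=> h i j; rewrite /sh addnA h. Qed.

Lemma ray_inc x q : geod_ray adj q -> d x (q 1) = (d x (q 0)).+1 ->
  forall k, d x (q k) = d x (q 0) + k.
Proof.
move=> h e k.
have := @Inc x q k.+1 0 (ray_fwalk _ h) (fun k _ => ray_nb k h) (ltn0Sn _) e k.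
by rewrite add0n; apply.
Qed.

Lemma ev_inc x q : geod_ray adj q -> exists K, forall t, d x (q (K + t)) = d x (q K) + t.
Proof.
move=> h.
suff [K hK] : exists K, d x (q K.+1) = (d x (q K)).+1.
  exists K => t; have := ray_inc x (sh_ray K h); rewrite /sh addn1 addn0; apply; exact: hK.
apply/not_existsP => hn.
have dec : forall k, d x (q k) + k = d x (q 0).
  elim=> [|k IH]; first by rewrite addn0.
  case: (pm1 x (ray_walk k h)) => e; first by case: (hn k).
  lia.
have := dec (d x (q 0)).+1; lia.
Qed.

Lemma cat_ray x p q m : geo x p m -> geod_ray adj q -> q 0 = p m ->
  (forall k, d x (q k) = m + k) -> geod_ray adj (catf p q m).
Proof.
move=> gp hq e hd i k; rewrite /catf.
case: (leqP (i + k) m) => h1.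
  rewrite (leq_trans (leq_addr k i) h1); rewrite (geo_seg gp (leq_addr k i) h1); lia.
case: (leqP i m) => h2.
  apply/eqP; rewrite eqn_leq; apply/andP; split.
    have t1 := d_tri (p i) (p m) (q (i + k - m)).
    rewrite (geo_seg gp h2 (leqnn m)) -e in t1.
    have t2 := ray_d hq (leq0n (i + k - m)).
    lia.
  have t1 := d_tri x (p i) (q (i + k - m)).
  rewrite hd in t1; case: gp => _ _ pd; rewrite pd // in t1; lia.
have -> : i + k - m = (i - m) + k by lia.
by apply: hq.
Qed.

Definition tail_eq (r r' : nat -> V) := exists a b, forall n, r (n + a) = r' (n + b).

Lemma tail_refl r : tail_eq r r.
Proof. by exists 0, 0. Qed.
Lemma tail_sym r r' : tail_eq r r' -> tail_eq r' r.
Proof. by case=> a [b h]; exists b, a => n; rewrite h. Qed.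
Lemma tail_trans r1 r2 r3 : tail_eq r1 r2 -> tail_eq r2 r3 -> tail_eq r1 r3.
Proof.
case=> a [b h]; case=> c [e h']; exists (a + c), (e + b) => n.
have -> : n + (a + c) = (n + c) + a by lia.
rewrite h; have -> : n + c + b = (n + b) + c by lia.
rewrite h'; congr r3; lia.
Qed.

Lemma tail_equiv r r' : tail_eq r r' -> ray_equiv r r'.
Proof.
case=> a [b h] N; exists (N + a); split; first exact: leq_addr.
by exists (N + b); left; split; rewrite -?addSn h.
Qed.

Lemma equiv_tail r r' : geod_ray adj r -> geod_ray adj r' -> ray_equiv r r' -> tail_eq r r'.
Proof.
move=> hr hr' he.
set x := r 0.
have shared : forall N, exists n m, N <= n /\ r n = r' m.
  move=> N; case: (he N) => n [hn [m [[e1 e2]|[e1 e2]]]].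
  - by exists n, m.
  - by exists n.+1, m; split => //; lia.
case: (ev_inc x hr') => K hK.
have bnd : forall m, d x (r' m) <= d x (r' 0) + m.
  move=> m; have := d_tri x (r' 0) (r' m); rewrite (ray_d hr' (leq0n m)) subn0 //.
have dr : forall n, d x (r n) = n by move=> n; rewrite /x -{2}(add0n n) hr.
pose N0 := d x (r' 0) + K + 1.
have big : forall n m, N0 <= n -> r n = r' m -> K <= m /\ n + K = d x (r' K) + m.
  move=> n m hn e.
  have hm : K <= m.
    case: (leqP K m) => // hmK; have := bnd m; rewrite -e dr; lia.
  split => //; have := hK (m - K); rewrite subnKC // -e dr; lia.
case: (shared N0) => n1 [m1 [hn1 e1]].
have [hm1 c1] := big _ _ hn1 e1.
exists n1, m1 => t; rewrite addnC (addnC t).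
case: (shared (n1 + t)) => n2 [m2 [hn2 e2]].
have [hm2 c2] := big _ _ (leq_trans hn1 (leq_trans (leq_addr t n1) hn2)) e2.
pose L := n2 - n1.
have gp : geo (r n1) (sh n1 r) L by have := ray_geo L (sh_ray n1 hr); rewrite /sh addn0.
have gq : geo (r n1) (sh m1 r') L.
  have := ray_geo L (sh_ray m1 hr'); rewrite /sh addn0 e1 //.
have := T3 gp gq _ t _; rewrite /sh; apply.
  have -> : n1 + L = n2 by rewrite /L; lia.
  have -> : m1 + L = m2 by rewrite /L; lia.
  by [].
rewrite /L; lia.
Qed.


Local Notation End := (End adj).
Local Notation ends w := (proj1_sig w).

Lemma end_spec (w : End) : exists r0, geod_ray adj r0 /\ ends w = [set r' | geod_ray adj r' /\ ray_equiv r0 r'].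
Proof. by case: w => E [r0 [h e]]; exists r0. Qed.

Lemma end_geod {w : End} {r} : ends w r -> geod_ray adj r.
Proof. by case: (end_spec w) => r0 [h ->] []. Qed.

Lemma end_tail {w : End} {r r'} : ends w r -> ends w r' -> tail_eq r r'.
Proof.
case: (end_spec w) => r0 [h ->] [g1 e1] [g2 e2].
apply: tail_trans (tail_sym (equiv_tail h g1 e1)) (equiv_tail h g2 e2).
Qed.

Lemma end_in {w : End} {r r'} : ends w r -> geod_ray adj r' -> tail_eq r r' -> ends w r'.
Proof.
case: (end_spec w) => r0 [h ->] [g1 e1] g2 t; split => //.
apply: tail_equiv; apply: tail_trans (equiv_tail h g1 e1) t.
Qed.

Lemma end_ex (w : End) : exists r, ends w r.
Proof. case: (end_spec w) => r0 [h ->]; exists r0; split => //; exact: tail_equiv (tail_refl r0). Qed.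

Lemma end_eq {w w' : End} {r} : ends w r -> ends w' r -> w = w'.
Proof.
move=> h h'.
have e : ends w = ends w'.
  apply/seteqP; split => r1 h1.
    apply: end_in h' (end_geod h1) (end_tail h h1).
  apply: end_in h (end_geod h1) (end_tail h' h1).
case: w w' e h h' => E p [E' p'] /= e _ _; subst E'.
by congr exist; apply: Prop_irrelevance.
Qed.

Definition mk_end r (h : geod_ray adj r) : End :=
  exist (is_end adj) [set r' | geod_ray adj r' /\ ray_equiv r r'] (ex_intro _ r (conj h erefl)).

Lemma mk_end_in r (h : geod_ray adj r) : ends (mk_end h) r.
Proof. by split => //; exact: tail_equiv (tail_refl r). Qed.

Lemma ray_ex (w : End) x : exists r, ray_to w x r.
Proof.
case: (end_ex w) => r0 h0; have g0 := end_geod h0.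
case: (ev_inc x g0) => K hK.
case: (geo_ex x (r0 K)) => p [gp pn].
have hq := sh_ray K g0.
have e : sh K r0 0 = p (d x (r0 K)) by rewrite /sh addn0 pn.
have hd : forall k, d x (sh K r0 k) = d x (r0 K) + k by move=> k; rewrite /sh hK.
have hc := cat_ray gp hq e hd.
exists (catf p (sh K r0) (d x (r0 K))); split.
  apply: end_in h0 hc _; exists K, (d x (r0 K)) => n.
  rewrite (addnC n (d x (r0 K))) catf_end; last by rewrite e.
  by rewrite /sh addnC.
by rewrite catf0; case: gp.
Qed.

Lemma ray_uniq {w : End} {x r r'} : ray_to w x r -> ray_to w x r' -> r = r'.
Proof.
move=> [h0 e0] [h1 e1]; have g0 := end_geod h0; have g1 := end_geod h1.
case: (end_tail h0 h1) => a [b hab].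
have eab : a = b.
  have := hab 0; rewrite !add0n => e.
  have := ray_d g0 (leq0n a); have := ray_d g1 (leq0n b).
  by rewrite e0 e1 e => -> ; rewrite !subn0.
subst b; apply: funext => n.
case: (leqP a n) => h.
  by have := hab (n - a); rewrite subnK.
have ga : geo x r a by rewrite -e0; apply: ray_geo.
have gb : geo x r' a by rewrite -e1; apply: ray_geo.
apply: (T3 ga gb) => //; last exact: ltnW.
by have := hab 0; rewrite add0n.
Qed.

Lemma pass {w : End} x {u v r} : adj u v -> d x v = (d x u).+1 -> fwd adj (u, v) w ->
  ray_to w x r -> r (d x u) = u /\ r (d x u).+1 = v.
Proof.
move=> a e [s [[hs s0] s1]] hr /=.
have gs := end_geod hs.
case: (geo_ex x u) => p [gp pn].
have hd : forall k, d x (s k) = d x u + k.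
  have := ray_inc x gs; rewrite s0 s1 /=; apply; exact: e.
have e0 : s 0 = p (d x u) by rewrite pn.
have hc := cat_ray gp gs e0 hd.
have hrc : ray_to w x (catf p s (d x u)).
  split; last by rewrite catf0; case: gp.
  apply: end_in hs hc _; exists 0, (d x u) => n.
  by rewrite addn0 addnC catf_end.
rewrite (ray_uniq hr hrc); split.
  by rewrite /catf leqnn.
by rewrite -addn1 catf_end.
Qed.


Lemma fwd_ray {w : End} {a r} : ray_to w a r -> fwd adj (a, r 1) w.
Proof. by move=> h; exists r. Qed.

Lemma fwd_rayE {w : End} {a b r} : ray_to w a r -> fwd adj (a, b) w -> r 1 = b.
Proof. by move=> h [s [hs s1]]; rewrite (ray_uniq h hs). Qed.

Lemma ray_sh {w : End} {a r} k : ray_to w a r -> ray_to w (r k) (sh k r).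
Proof.
move=> [h r0]; split; last by rewrite /sh addn0.
apply: end_in h (sh_ray k (end_geod h)) _; exists k, 0 => n.
by rewrite /sh addn0 addnC.
Qed.

Lemma fwd_dich (w : End) a b : adj a b -> fwd adj (a, b) w \/ fwd adj (b, a) w.
Proof.
move=> hab; case: (ray_ex w a) => r hr.
case: (eqVneq (r 1) b) => e.
  by left; rewrite -e; apply: fwd_ray hr.
right; case: hr => hr r0; have gr := end_geod hr.
have hd1 : d b (r 1) = (d b (r 0)).+1.
  have dba : d b a = 1 by rewrite d_sym (d_adj hab).
  rewrite r0 dba; have := pm1 b (ray_walk 0 gr).
  rewrite r0 dba => -[]// h.
  have h0 : d b (r 1) = 0 by lia.
  by move: e; rewrite -(d0 _ _ h0) eqxx.
pose p (i : nat) := if i is 0 then b else a.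
have gp : geo b p 1.
  split => //; first by move=> [|i] //= _; rewrite adj_sym.
  move=> [|[|i]] hi /=; [exact: d_refl | by rewrite d_sym d_adj | by []].
have hd : forall k, d b (r k) = 1 + k.
  by move=> k; rewrite (ray_inc b gr hd1 k) r0 d_sym d_adj.
have hc := cat_ray gp gr r0 hd.
exists (catf p r 1); split; [split|].
- apply: end_in hr hc _; exists 0, 1 => n.
  by rewrite addn0 addnC catf_end // r0.
- by [].
- by [].
Qed.

Lemma fwd_disj (w : End) a b : adj a b -> fwd adj (a, b) w -> fwd adj (b, a) w -> False.
Proof.
move=> hab [r [hr r1]] [s [hs s1]] /=; simpl in *.
rewrite -r1 in hs; have e := ray_uniq (ray_sh 1 hr) hs.
have e2 : r 2 = r 0 by rewrite -[r 2]/(sh 1 r 1) e s1; case: hr.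
by move: (ray_nb 0 (end_geod hr.1)); rewrite e2 eqxx.
Qed.

Lemma fwd_compl a b : adj a b -> ~` fwd adj (a, b) = fwd adj (b, a).
Proof.
move=> hab; apply/seteqP; split => w /=.
  by move=> h; case: (fwd_dich w hab) => // h'; exfalso; apply: h.
by move=> h1 h2; apply: (fwd_disj hab h2 h1).
Qed.

Lemma fwd_open e : oedge adj e -> end_open (fwd adj e).
Proof. by move=> he w hw; exists e; split. Qed.

Lemma fwd_clopen e : oedge adj e -> end_clopen (fwd adj e).
Proof.
case: e => a b he; split; first exact: fwd_open.
rewrite fwd_compl //; apply: fwd_open; rewrite /oedge /= adj_sym; exact: he.
Qed.


Variables (o : V) (g ginv : V -> V).
Hypothesis Hg : is_aut adj g ginv.

Lemma gK : cancel g ginv. Proof. by case: Hg. Qed.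
Lemma ginvK : cancel ginv g. Proof. by case: Hg. Qed.
Lemma g_adj x y : adj (g x) (g y) = adj x y. Proof. by case: Hg. Qed.
Lemma ginv_adj x y : adj (ginv x) (ginv y) = adj x y.
Proof. by rewrite -g_adj !ginvK. Qed.

Lemma d_map (h : V -> V) : (forall x y, adj (h x) (h y) = adj x y) -> forall x y, d (h x) (h y) <= d x y.
Proof.
move=> hh x y; case: (dE x y) => p [p0 pn pw].
have hw : fwalk (h \o p) (d x y) by move=> i hi /=; rewrite hh; apply: pw.
by have := dW hw; rewrite /= p0 pn.
Qed.

Lemma g_d x y : d (g x) (g y) = d x y.
Proof.
apply/eqP; rewrite eqn_leq (@d_map g g_adj) /=.
by have := @d_map ginv ginv_adj (g x) (g y); rewrite !gK.
Qed.

Lemma ginv_d x y : d (ginv x) (ginv y) = d x y.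
Proof. by rewrite -g_d !ginvK. Qed.

Lemma g_ray r : geod_ray adj r -> geod_ray adj (g \o r).
Proof. by move=> h i k /=; rewrite g_d. Qed.
Lemma ginv_ray r : geod_ray adj r -> geod_ray adj (ginv \o r).
Proof. by move=> h i k /=; rewrite ginv_d. Qed.

Lemma tail_map (f : V -> V) r r' : tail_eq r r' -> tail_eq (f \o r) (f \o r').
Proof. by case=> a [b h]; exists a, b => n /=; rewrite h. Qed.

Definition rep (w : End) : nat -> V := epsilon (inhabits (fun _ => o)) (ends w).
Lemma rep_in w : ends w (rep w).
Proof. by rewrite /rep; apply: epsilon_spec; apply: end_ex. Qed.
Lemma grep_ray w : geod_ray adj (g \o rep w).
Proof. exact: g_ray (end_geod (rep_in w)). Qed.
Definition gend (w : End) : End := mk_end (grep_ray w).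

Lemma gend_in {w r} : ends w r -> ends (gend w) (g \o r).
Proof.
move=> h; apply: end_in (mk_end_in (grep_ray w)) (g_ray (end_geod h)) _.
apply: tail_map; exact: end_tail (rep_in w) h.
Qed.

Lemma preim_gend (A : set End) w : end_preim g A w <-> A (gend w).
Proof.
split.
  case=> w' [hA [r [hr hr']]].
  by rewrite -(end_eq hr' (gend_in hr)).
by move=> h; exists (gend w); split => //; exists (rep w); split; [apply: rep_in | apply: gend_in (rep_in w)].
Qed.

Lemma fwd_g a b w : fwd adj (g a, g b) (gend w) <-> fwd adj (a, b) w.
Proof.
split.
  case=> s [[hs s0] s1]; rewrite /= in s0 s1.
  exists (ginv \o s); split; [split|] => /=; last by rewrite s1 gK.
    apply: end_in (rep_in w) (ginv_ray (end_geod hs)) _.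
    have t := tail_map ginv (end_tail (gend_in (rep_in w)) hs).
    case: t => x [y t]; exists x, y => n; rewrite -t /=; by rewrite gK.
  by rewrite s0 gK.
case=> r [[hr r0] r1]; rewrite /= in r0 r1.
by exists (g \o r); split; [split; [apply: gend_in | rewrite /= r0] | rewrite /= r1].
Qed.

Lemma preim_fwd a b : end_preim g (fwd adj (g a, g b)) = fwd adj (a, b).
Proof. by apply/seteqP; split => w /=; rewrite preim_gend fwd_g. Qed.

Lemma preim_open (U : set End) : end_open U -> end_open (end_preim g U).
Proof.
move=> hU w /preim_gend hw; case: (hU _ hw) => [[a b]] [he hf hs].
exists (ginv a, ginv b); split.
- by rewrite /oedge /= ginv_adj.
- by rewrite -fwd_g !ginvK.
- move=> w' hw'; apply/preim_gend; apply: hs; by rewrite -(ginvK a) -(ginvK b) fwd_g.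
Qed.

Lemma preim_compl (U : set End) : end_preim g (~` U) = ~` end_preim g U.
Proof. by apply/seteqP; split => w /=; rewrite !preim_gend. Qed.

Lemma preim_clopen (U : set End) : end_clopen U -> end_clopen (end_preim g U).
Proof. by case=> h1 h2; split; [apply: preim_open | rewrite -preim_compl; apply: preim_open]. Qed.


Lemma away_ray {w : End} {a r} k : ray_to w a r -> d a (r k.+1) = (d a (r k)).+1.
Proof. move=> [h r0]; rewrite -r0 !(ray_d (end_geod h) (leq0n _)); lia. Qed.

Lemma fwd_sub {w : End} {a r} k : ray_to w a r -> fwd adj (r k, r k.+1) `<=` fwd adj (a, r 1).
Proof.
move=> hr w' hw'; case: (ray_ex w' a) => r' hr'.
have hadj : adj (r k) (r k.+1) by apply: ray_walk (end_geod hr.1).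
have [e1 e2] := pass hadj (away_ray k hr) hw' hr'.
have ga : geo a r k.+1 by case: hr => h r0; rewrite -r0; apply: ray_geo (end_geod h).
have ga' : geo a r' k.+1 by case: hr' => h r0; rewrite -r0; apply: ray_geo (end_geod h).
have dk : d a (r k) = k by case: ga => _ _ ->.
rewrite dk in e1 e2.
have := T3 ga' ga e2 1 (ltn0Sn _) => e.
by exists r'; split => //; rewrite e.
Qed.

Lemma nested {w : End} {x r} a b : ray_to w x r -> fwd adj (a, b) w ->
  exists N, forall n, N <= n -> fwd adj (r n, r n.+1) `<=` fwd adj (a, b).
Proof.
move=> hr [s [hs s1]]; rewrite /= in s1.
case: (end_tail hr.1 hs.1) => al [be h].
exists al => n hn.
have e1 : r n = s (n - al + be) by rewrite -h subnK.
have e2 : r n.+1 = s (n - al + be).+1.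
  have -> : (n - al + be).+1 = (n.+1 - al) + be by lia.
  by rewrite -h subnK //; lia.
rewrite e1 e2 -s1; exact: (fwd_sub _ hs).
Qed.

Lemma open_setI (U U' : set End) : end_open U -> end_open U' -> end_open (U `&` U').
Proof.
move=> hU hU' w [hw hw'].
case: (hU w hw) => [[a b]] [he hf hs]; case: (hU' w hw') => [[a' b']] [he' hf' hs'].
case: (ray_ex w o) => r hr.
case: (nested hr hf) => N hN; case: (nested hr hf') => N' hN'.
exists (r (maxn N N'), r (maxn N N').+1); split.
- exact: ray_walk (end_geod hr.1).
- by have := fwd_ray (ray_sh (maxn N N') hr); rewrite /sh addn1.
- move=> w'' hw''; split.
    by apply: hs; apply: (hN (maxn N N')) => //; exact: leq_maxl.
  by apply: hs'; apply: (hN' (maxn N N')) => //; exact: leq_maxr.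
Qed.

Lemma open_setU (U U' : set End) : end_open U -> end_open U' -> end_open (U `|` U').
Proof.
move=> hU hU' w [hw|hw].
  by case: (hU w hw) => e [he hf hs]; exists e; split => // w' /hs; left.
by case: (hU' w hw) => e [he hf hs]; exists e; split => // w' /hs; right.
Qed.

Lemma clopen_setU (U U' : set End) : end_clopen U -> end_clopen U' -> end_clopen (U `|` U').
Proof.
case=> h1 h2 [h1' h2']; split; first exact: open_setU.
by rewrite setCU; apply: open_setI.
Qed.

Lemma clopen0 : end_clopen (@set0 End).
Proof.
split; first by move=> w [].
move=> w _; case: (ray_ex w o) => r hr; exists (o, r 1); split => //.
- by rewrite /oedge /= -hr.2; apply: ray_walk (end_geod hr.1).
- exact: fwd_ray hr.
- by move=> w' _ [].
Qed.


Definition useq {I : eqType} (s : seq I) (F : I -> set End) : set End :=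
  [set w | exists i, i \in s /\ F i w].

Lemma useq_nil {I : eqType} (F : I -> set End) : useq [::] F = set0.
Proof. by apply/seteqP; split => w // [i []]. Qed.

Lemma useq_cons {I : eqType} i (s : seq I) F : useq (i :: s) F = F i `|` useq s F.
Proof.
apply/seteqP; split => w.
  case=> j []; rewrite in_cons => /orP [/eqP ->|hj] hw; [by left | by right; exists j].
case=> [hw|[j [hj hw]]]; first by exists i; rewrite mem_head.
by exists j; rewrite in_cons hj orbT.
Qed.

Lemma useq_clopen {I : eqType} (s : seq I) F : (forall i, i \in s -> end_clopen (F i)) ->
  end_clopen (useq s F).
Proof.
elim: s => [|i s IH] h; first by rewrite useq_nil; exact: clopen0.
rewrite useq_cons; apply: clopen_setU; first by apply: h; rewrite mem_head.
by apply: IH => j hj; apply: h; rewrite in_cons hj orbT.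
Qed.

Lemma horo_val {w : End} x y a b : adj a b -> (d x b = (d x a).+1)%N -> (d y b = (d y a).+1)%N ->
  fwd adj (a, b) w -> horo w x y = ((d x a)%:Z - (d y a)%:Z)%R.
Proof.
move=> hab hx hy hf; rewrite /horo.
set v := epsilon _ _.
have hv : on_both_rays w x y v.
  apply: epsilon_spec.
  case: (ray_ex w x) => r hr; case: (ray_ex w y) => r' hr'.
  have [ea1 _] := pass hab hx hf hr; have [ea2 _] := pass hab hy hf hr'.
  exists a, r, r'; split => //; exists (d x a), (d y a); split => //.
case: hv => r [r' [hr hr' [i [j [ri rj]]]]].
have [ea1 _] := pass hab hx hf hr; have [ea2 _] := pass hab hy hf hr'.
have gr := end_geod hr.1; have gr' := end_geod hr'.1.
have dxv : d x v = i by rewrite -ri -hr.2 (ray_d gr (leq0n i)) subn0.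
have dyv : d y v = j by rewrite -rj -hr'.2 (ray_d gr' (leq0n j)) subn0.
have e1 : forall t, r (i + t) = r' (j + t).
  have h1 := ray_sh i hr; have h2 := ray_sh j hr'; rewrite ri in h1; rewrite rj in h2.
  by move=> t; rewrite -[r (i + t)]/(sh i r t) (ray_uniq h1 h2).
have e2 : forall t, r (d x a + t) = r' (d y a + t).
  have h1 := ray_sh (d x a) hr; have h2 := ray_sh (d y a) hr'; rewrite ea1 in h1; rewrite ea2 in h2.
  by move=> t; rewrite -[r (d x a + t)]/(sh (d x a) r t) (ray_uniq h1 h2).
rewrite dxv dyv.
case: (leqP i (d x a)) => hi.
  have := e1 (d x a - i); rewrite subnKC // ea1 => e.
  have e' : r' (j + (d x a - i)) = r' (d y a) by rewrite -e ea2.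
  move/(ray_inj gr'): e' => e'; lia.
have := e2 (i - d x a); rewrite subnKC; last by lia.
rewrite ri -rj => /(ray_inj gr') e; lia.
Qed.

Local Open Scope ring_scope.

Variable nu : set End -> CC.
Hypothesis Hnu : is_FA nu.

Lemma nu0 : nu set0 = 0.
Proof.
have := Hnu clopen0 clopen0 (setI0 set0); rewrite setU0 => h.
by apply: (@addrI _ (nu set0)); rewrite addr0.
Qed.

Lemma FA_big {I : eqType} (s : seq I) F : uniq s -> (forall i, i \in s -> end_clopen (F i)) ->
  (forall i j, i \in s -> j \in s -> i != j -> F i `&` F j = set0) ->
  nu (useq s F) = \sum_(i <- s) nu (F i).
Proof.
elim: s => [|i s IH] hu hc hd; first by rewrite useq_nil nu0 big_nil.
rewrite useq_cons big_cons; case/andP: hu => his hu.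
have hc' : forall j, j \in s -> end_clopen (F j) by move=> j hj; apply: hc; rewrite in_cons hj orbT.
rewrite Hnu; first congr (_ + _).
- apply: IH => // j k hj hk; apply: hd; by rewrite in_cons ?hj ?hk orbT.
- by apply: hc; rewrite mem_head.
- exact: useq_clopen.
- apply/seteqP; split => // w [hw [j [hj hw']]].
  have : F i `&` F j = set0.
    apply: hd; rewrite ?mem_head ?in_cons ?hj ?orbT //.
    by apply/eqP => e; move: his; rewrite e hj.
  by move/seteqP => [/(_ w (conj hw hw'))].
Qed.


Variable z : CC.
Hypothesis Hz : z != 0.

Lemma cocycle_val {w : End} a b : adj a b -> (d (g o) b = (d (g o) a).+1)%N -> (d o b = (d o a).+1)%N ->
  fwd adj (a, b) w -> cocycle adj o z g w = z ^ ((d (g o) a)%:Z - (d o a)%:Z).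
Proof. by move=> hab h1 h2 hf; rewrite /cocycle (horo_val _ _ hab h1 h2 hf). Qed.

Lemma fa_integral_spec (nu' : set End -> CC) f A :
  (exists t, lc_partition f A t) ->
  exists n P c, lc_partition f A (existT _ n (P, c)) /\
    fa_integral nu' f A = \sum_(i < n) c i * nu' (P i).
Proof.
move=> hex; rewrite /fa_integral.
set E := epsilon _ _.
have hE : lc_partition f A E by apply: epsilon_spec.
clearbody E; case: E hE => n [P c] hE; by exists n, P, c.
Qed.

Lemma preim_set0 : end_preim g (@set0 End) = set0.
Proof. by apply/seteqP; split => w //; case=> w' []. Qed.

Lemma preim_disj (A B : set End) : A `&` B = set0 -> end_preim g A `&` end_preim g B = set0.
Proof.
move=> h; apply/seteqP; split => // w [/preim_gend h1 /preim_gend h2].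
have : (A `&` B) (gend w) by [].
by rewrite h.
Qed.

Lemma dir1 : (forall A : set End, end_clopen A -> pi_z o z g nu A = nu A) ->
  (forall e : V * V, oedge adj e -> points_away adj o e -> points_away adj (ginv o) e ->
     z ^+ d o e.1 * nu (fwd adj e) = z ^+ d o (edge_act g e).1 * nu (fwd adj (edge_act g e))).
Proof.
move=> H [a b]; rewrite /oedge /points_away /edge_act /= => he ho hgo.
have hf : adj (g a) (g b) by rewrite g_adj.
have hfo : (d o (g b) = (d o (g a)).+1)%N by rewrite -{1 2}(ginvK o) !g_d.
have hfgo : (d (g o) (g b) = (d (g o) (g a)).+1)%N by rewrite !g_d.
set c0 := z ^ ((d (g o) (g a))%:Z - (d o (g a))%:Z).
have hc : forall w, fwd adj (g a, g b) w -> cocycle adj o z g w = c0.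
  by move=> w hw; rewrite (cocycle_val hf hfgo hfo hw).
have := H _ (@fwd_clopen (g a, g b) hf); rewrite /pi_z.
have hex : exists t, lc_partition (cocycle adj o z g) (fwd adj (g a, g b)) t.
  exists (existT _ 1%N (fun _ => fwd adj (g a, g b), fun _ => c0)); split => /=.
  - by move=> _; apply: fwd_clopen.
  - by move=> [[|i] hi] [[|j] hj].
  - by move=> w; split; [move=> hw; exists ord0 | case].
  - by move=> i w /hc.
case: (fa_integral_spec (fa_act g nu) hex) => n [P [c [[hP hdisj hcov hconst] ->]]].
simpl in hP, hdisj, hcov, hconst.
rewrite /fa_act /=.
have eb : \sum_(i < n) c i * nu (end_preim g (P i)) = \sum_(i < n) c0 * nu (end_preim g (P i)).
  apply: eq_bigr => i _.
  case: (pselect (exists w, P i w)) => [[w hw]|hne].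
    rewrite -(hconst _ _ hw) hc //; by apply/hcov; exists i.
  have -> : P i = set0 by apply/seteqP; split => // w hw; apply: hne; exists w.
  by rewrite preim_set0 nu0 !mulr0.
rewrite eb -mulr_sumr.
have -> : \sum_(i < n) nu (end_preim g (P i)) = nu (fwd adj (a, b)).
  rewrite -(@FA_big _ (index_enum 'I_n) (fun i => end_preim g (P i)) (index_enum_uniq _)).
  - congr nu; rewrite -preim_fwd; apply/seteqP; split => w.
      case=> i [_ /preim_gend hw]; apply/preim_gend; apply/hcov; by exists i.
    move/preim_gend/hcov => [i hi]; exists i; split; [exact: mem_index_enum | exact/preim_gend].
  - by move=> i _; apply: preim_clopen.
  - by move=> i j _ _ hij; apply: preim_disj; apply: hdisj.
move=> e1.
have ec0 : c0 = z ^ ((d o a)%:Z - (d o (g a))%:Z) by rewrite /c0 g_d.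
rewrite -e1 ec0 mulrA !exprnP -expfzDr //; congr (_ ^ _ * _); lia.
Qed.


Local Open Scope nat_scope.

Lemma par_ex {v} : 0 < d o v -> exists p, adj p v /\ d o v = (d o p).+1.
Proof.
move=> hv; case: (geo_ex o v) => p [[p0 pw pd] pn].
exists (p (d o v).-1); split.
  have hlt : (d o v).-1 < d o v by lia.
  by have := pw _ hlt; rewrite prednK // pn.
by rewrite pd ?prednK // leq_pred.
Qed.

Definition Cyl (v : V) : set End := [set w | exists r, ray_to w o r /\ r (d o v) = v].

Lemma cyl_ray {w : End} {r : nat -> V} v : ray_to w o r -> Cyl v w <-> r (d o v) = v.
Proof.
move=> hr; split; last by move=> h; exists r.
by case=> r' [hr' e]; rewrite (ray_uniq hr hr').
Qed.

Lemma ray_do {w : End} {r : nat -> V} k : ray_to w o r -> d o (r k) = k.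
Proof. by case=> h r0; rewrite -{1}r0 (ray_d (end_geod h) (leq0n k)) subn0. Qed.

Lemma cyl_fwd p v : adj p v -> d o v = (d o p).+1 -> Cyl v = fwd adj (p, v).
Proof.
move=> hpv e; apply/seteqP; split => w hw.
  case: hw => r [hr rv].
  have hp : r (d o p) = p.
    have a1 : adj (r (d o p)) v by rewrite -rv e; apply: ray_walk (end_geod hr.1).
    apply: (par_uniq o a1 hpv) => //; by rewrite (ray_do _ hr).
  have := fwd_ray (ray_sh (d o p) hr); by rewrite /sh addn1 -e rv hp.
case: (ray_ex w o) => r hr; exists r; split => //.
by have [_ h2] := pass hpv e hw hr; rewrite e.
Qed.

Lemma cyl_disj u v : d o u = d o v -> u != v -> Cyl u `&` Cyl v = set0.
Proof.
move=> e ne; apply/seteqP; split => // w [[r [hr ru]] [r' [hr' rv]]].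
by move: ne; rewrite -ru -rv e (ray_uniq hr hr') eqxx.
Qed.

Lemma cyl_clopen v : 0 < d o v -> end_clopen (Cyl v).
Proof.
move=> hv; case: (par_ex hv) => p [hpv e]; rewrite (cyl_fwd hpv e).
exact: (@fwd_clopen (p, v)).
Qed.

Lemma cyl_cover (w : End) N : exists v, d o v = N /\ Cyl v w.
Proof.
case: (ray_ex w o) => r hr; exists (r N); split; first exact: (ray_do _ hr).
by exists r; rewrite (ray_do _ hr).
Qed.

Hypothesis Hleaf : no_leaves adj.

Lemma fwd_ne a b : adj a b -> exists w, fwd adj (a, b) w.
Proof.
move=> hab.
have [nx hnx] : exists nx : V * V -> V, forall pc, adj pc.2 (nx pc) /\ nx pc != pc.1.
  apply: (choice (fun pc y => adj pc.2 y /\ y != pc.1)) => [[p c]] /=.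
  case: (Hleaf c) => y1 [y2 [h1 h2 h12]].
  case: (eqVneq y1 p) => e; last by exists y1.
  by exists y2; split => //; rewrite -e eq_sym.
pose st := fix st n := if n is n'.+1 then ((st n').2, nx (st n')) else (a, b).
pose r n := (st n).1.
have inv : forall n, adj (st n).1 (st n).2.
  by elim=> [|n IH] //=; case: (hnx (st n)).
have rw : forall n, adj (r n) (r n.+1) by move=> n; exact: inv.
have nb : forall n, r n.+2 != r n by move=> n; rewrite /r /=; case: (hnx (st n)).
have gr : geod_ray adj r.
  move=> i k.
  have := @Inc (r i) r (i + k).+1 i (fun j _ => rw j) (fun j _ => nb j) ltac:(lia).
  rewrite d_refl (d_adj (rw i)) => /(_ erefl k ltac:(lia)); by rewrite add0n.
exists (mk_end gr), r; split => //; split => //; exact: mk_end_in.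
Qed.

Lemma cyl_ne v : 0 < d o v -> exists w, Cyl v w.
Proof.
move=> hv; case: (par_ex hv) => p [hpv e]; rewrite (cyl_fwd hpv e); exact: fwd_ne.
Qed.


Hypothesis Hlf : locally_finite adj.

Lemma nbr_ex : exists nb : V -> seq V, forall x y, adj x y -> y \in nb x.
Proof. by apply: (choice (fun x s => forall y, adj x y -> y \in s)) => x; apply: Hlf. Qed.

Lemma level N : exists s, uniq s /\ forall v, (v \in s) = (d o v == N).
Proof.
case: nbr_ex => nb hnb.
elim: N => [|N [s [us hs]]].
  exists [:: o]; split => // v; rewrite inE.
  case: (eqVneq v o) => [->|ne]; first by rewrite d_refl.
  by apply/esym/negP => /eqP /d0 e; move: ne; rewrite e eqxx.
exists (undup [seq v <- flatten (map nb s) | d o v == N.+1]); split; first exact: undup_uniq.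
move=> v; rewrite mem_undup mem_filter andb_idr // => /eqP hv.
have hv0 : 0 < d o v by lia.
case: (par_ex hv0) => p [hpv e].
apply/flatten_mapP; exists p; last exact: hnb.
by rewrite hs; apply/eqP; lia.
Qed.

Definition gpth (u : V) : nat -> V :=
  epsilon (inhabits (fun _ => o)) (fun p => geo o p (d o u) /\ p (d o u) = u).

Lemma gpth_spec u : geo o (gpth u) (d o u) /\ gpth u (d o u) = u.
Proof. exact: (epsilon_spec _ _ (geo_ex o u)). Qed.

Lemma gpth_d u k : k <= d o u -> d o (gpth u k) = k.
Proof. by move=> hk; case: (gpth_spec u) => [[_ _ pd] _]; apply: pd. Qed.

Lemma gpth_ray {w : End} {r : nat -> V} u : ray_to w o r -> r (d o u) = u ->
  forall k, k <= d o u -> r k = gpth u k.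
Proof.
move=> hr ru k hk; case: (gpth_spec u) => gu eu.
have gr : geo o r (d o u) by case: hr => h r0; rewrite -{1}r0; apply: ray_geo (end_geod h).
by apply: (T3 gr gu) => //; rewrite ru eu.
Qed.

Lemma cyl_anc u k : k <= d o u -> Cyl u `<=` Cyl (gpth u k).
Proof.
move=> hk w [r [hr ru]]; exists r; split => //.
by rewrite gpth_d // (gpth_ray hr ru).
Qed.

Lemma gpth_gpth u j k : j <= k -> k <= d o u -> gpth (gpth u k) j = gpth u j.
Proof.
move=> hjk hk; case: (gpth_spec (gpth u k)) => g1 e1; rewrite gpth_d // in g1 e1.
case: (gpth_spec u) => g2 e2.
by apply: (T3 g1 (geo_le k g2 hk)) => //.
Qed.

Section Konig.
Variable A : set End.
Hypothesis HA : end_clopen A.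

Definition mixed v := (exists w, Cyl v w /\ A w) /\ (exists w, Cyl v w /\ ~ A w).

Lemma mixed_anc u k : mixed u -> k <= d o u -> mixed (gpth u k).
Proof.
move=> [[w1 [h1 a1]] [w2 [h2 a2]]] hk.
by split; [exists w1 | exists w2]; split => //; apply: cyl_anc.
Qed.

Definition inf v := forall N, d o v <= N -> exists u, [/\ d o u = N, gpth u (d o v) = v & mixed u].

Lemma inf_step v : inf v -> exists c, [/\ adj v c, d o c = (d o v).+1 & inf c].
Proof.
move=> hv; apply/not_existsP => hno.
case: nbr_ex => nb hnb.
have [f hf] : exists f : V -> nat, forall c, adj v c -> d o c = (d o v).+1 ->
    d o c <= f c /\ ~ exists u, [/\ d o u = f c, gpth u (d o c) = c & mixed u].
  apply: (choice (fun c N => adj v c -> d o c = (d o v).+1 ->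
    d o c <= N /\ ~ exists u, [/\ d o u = N, gpth u (d o c) = c & mixed u])) => c.
  case: (pselect (adj v c /\ d o c = (d o v).+1)) => [[h1 h2]|hn]; last first.
    by exists 0 => h1 h2; exfalso; apply: hn.
  have : ~ inf c by move=> hic; apply: (hno c); split.
  move/existsNP => [N /not_implyP [hN hN']]; by exists N.
set N := (\max_(c <- nb v) f c) + (d o v).+1.
case: (hv N ltac:(rewrite /N; lia)) => u [du gu mu].
set c := gpth u (d o v).+1.
have hc1 : d o c = (d o v).+1 by rewrite gpth_d // du /N; lia.
have hc0 : adj v c.
  case: (gpth_spec u) => [[_ pw _] _]; rewrite -gu /c; apply: pw; rewrite du /N; lia.
have [hfc hno'] := hf c hc0 hc1.
have hfN : f c <= N.
  have := @leq_bigmax_seq _ (nb v) (fun _ => true) f c (hnb _ _ hc0) erefl; rewrite /N; lia.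
apply: hno'; exists (gpth u (f c)); split.
- by rewrite gpth_d // du.
- rewrite gpth_gpth //; [by rewrite hc1 | by rewrite du].
- by apply: mixed_anc; rewrite // du.
Qed.

Lemma dec M : exists N, M <= N /\ forall v, d o v = N -> ~ mixed v.
Proof.
apply/not_existsP => hbad.
have hb : forall N, M <= N -> exists v, d o v = N /\ mixed v.
  move=> N hN; case: (pselect (exists v, d o v = N /\ mixed v)) => // hn.
  exfalso; apply: (hbad N); split => // v hv hm; apply: hn; by exists v.
have io : inf o.
  move=> N _; case: (hb (maxn N M) (leq_maxr _ _)) => v [dv mv].
  exists (gpth v N); split.
  - by rewrite gpth_d // dv leq_maxl.
  - by rewrite d_refl; case: (gpth_spec (gpth v N)) => [[p0 _ _] _].
  - by apply: mixed_anc; rewrite // dv leq_maxl.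
have [nx hnx] : exists nx : V -> V, forall v, inf v -> [/\ adj v (nx v), d o (nx v) = (d o v).+1 & inf (nx v)].
  apply: (choice (fun v c => inf v -> [/\ adj v c, d o c = (d o v).+1 & inf c])) => v.
  case: (pselect (inf v)) => h; last by exists v.
  by case: (inf_step h) => c hc; exists c.
pose r n := iter n nx o.
have hr : forall n, inf (r n) /\ d o (r n) = n.
  elim=> [|n [IH1 IH2]]; first by rewrite /r /= d_refl.
  by case: (hnx _ IH1) => _ h2 h3; rewrite /r /= -/(r n); split => //; rewrite h2 IH2.
have ha : forall n, adj (r n) (r n.+1).
  by move=> n; case: (hr n) => h _; case: (hnx _ h).
have gr : geod_ray adj r.
  move=> i k; apply/eqP; rewrite eqn_leq; apply/andP; split.
    have := dW' i (i + k) (fun j _ => ha j) (leq_addr k i) (leqnn _); rewrite addKn //.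
  have := d_tri o (r i) (r (i + k)); rewrite (hr i).2 (hr (i + k)).2; lia.
pose w := mk_end gr.
have hrw : ray_to w o r by split; [exact: mk_end_in | by []].
have mixn : forall n, mixed (r n).
  move=> n; case: (hr n) => h1 h2; case: (h1 n) => [|u [du gu mu]]; first by rewrite h2.
  by move: gu; rewrite h2 -du; case: (gpth_spec u) => _ -> <-.
have cyl_r : forall n, Cyl (r n.+1) = fwd adj (r n, r n.+1).
  by move=> n; apply: cyl_fwd; [exact: ha | rewrite !(hr _).2].
case: HA => hA hA'.
case: (pselect (A w)) => hw.
  case: (hA w hw) => [[a b]] [_ hf hs].
  case: (nested hrw hf) => N0 hN0.
  case: (mixn N0.+1) => _ [w' [hw' nw']].
  by apply: nw'; apply: hs; apply: (hN0 N0 (leqnn _)); rewrite -cyl_r.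
case: (hA' w hw) => [[a b]] [_ hf hs].
case: (nested hrw hf) => N0 hN0.
case: (mixn N0.+1) => [[w' [hw' nw']] _].
by apply: (hs w'); [apply: (hN0 N0 (leqnn _)); rewrite -cyl_r | ].
Qed.

End Konig.


Lemma away_deep p v y : adj p v -> d o v = (d o p).+1 -> d o y <= d o p -> d y v = (d y p).+1.
Proof.
move=> hpv e hy; case: (pm1 y hpv) => // h; exfalso.
case: (geo_ex v y) => q [gq qm]; set m := d v y in gq qm.
have hm : d y v = m by rewrite /m d_sym.
pose p' (i : nat) := if i is 0 then p else v.
have hw1 : fwalk p' 1 by move=> [|i] //.
case: (gq) => q0 qw qd.
pose W := catf p' q 1.
have Ww : fwalk W (1 + m) by apply: catf_walk => //; rewrite q0.
have WS : forall k, W k.+1 = q k.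
  move=> k; rewrite /W -add1n catf_end // q0.
have Wnb : forall k, k.+2 <= 1 + m -> W k.+2 != W k.
  move=> [|k] hk.
    rewrite WS /W /catf /=; apply/eqP => eq1.
    have := geo_seg gq (i:=1) (j:=m) ltac:(lia) (leqnn m).
    rewrite eq1 qm d_sym; lia.
  rewrite !WS; apply/eqP => eq1.
  have := qd k.+2 ltac:(lia); rewrite eq1 qd; lia.
have W1 : d o (W 1) = (d o (W 0)).+1 by rewrite WS q0 /W /catf /=.
have := @Inc o W (1 + m) 0 Ww Wnb ltac:(lia) W1 (1 + m) ltac:(lia).
rewrite add0n add1n WS qm /W /catf /=; lia.
Qed.

Definition par v := gpth v (d o v).-1.

Lemma par_spec v : 0 < d o v -> adj (par v) v /\ d o v = (d o (par v)).+1.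
Proof.
move=> hv; case: (gpth_spec v) => [[_ pw pd] pv].
rewrite /par gpth_d ?leq_pred // prednK //; split => //.
have hlt : (d o v).-1 < d o v by lia.
by have := pw _ hlt; rewrite prednK // pv.
Qed.

Definition K0 := (d o (g o)).+1.

Lemma decomp B : end_clopen B -> exists G : seq V, [/\ uniq G,
  forall v, v \in G -> K0 <= d o v /\ Cyl v `<=` B,
  forall u v, u \in G -> v \in G -> d o u = d o v & B = useq G Cyl].
Proof.
move=> hB; case: (dec hB K0) => N [hN hres].
case: (level N) => s [us hs].
exists [seq v <- s | `[< Cyl v `<=` B >]]; split.
- exact: filter_uniq.
- move=> v; rewrite mem_filter => /andP [/asboolP h1 h2]; move: h2; rewrite hs => /eqP ->; by split.
- move=> u v; rewrite !mem_filter !hs => /andP [_ /eqP ->] /andP [_ /eqP ->] //.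
- apply/seteqP; split => w.
    move=> hw; case: (cyl_cover w N) => v [dv cv]; exists v; split => //.
    rewrite mem_filter hs dv eqxx andbT; apply/asboolP => w' cw'.
    apply: NNPP => nw'; apply: (hres v dv); split; [by exists w | by exists w'].
  by case=> v []; rewrite mem_filter => /andP [/asboolP h _] /h.
Qed.

Local Open Scope ring_scope.

Definition cv (v : V) := z ^ ((d (g o) (par v))%:Z - (d o (par v))%:Z).

Hypothesis Hyp2 : forall e : V * V, oedge adj e -> points_away adj o e -> points_away adj (ginv o) e ->
     z ^+ d o e.1 * nu (fwd adj e) = z ^+ d o (edge_act g e).1 * nu (fwd adj (edge_act g e)).

Lemma loc v : (K0 <= d o v)%N ->
  (forall w, Cyl v w -> cocycle adj o z g w = cv v) /\
  cv v * nu (end_preim g (Cyl v)) = nu (Cyl v).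
Proof.
move=> hv; have hv0 : (0 < d o v)%N by move: hv; rewrite /K0; lia.
case: (par_spec _ hv0); set p := par v => hpv e.
have hgo : (d (g o) v = (d (g o) p).+1)%N by apply: away_deep => //; move: hv; rewrite /K0; lia.
rewrite (cyl_fwd hpv e); split; first by move=> w hw; rewrite (cocycle_val hpv hgo e hw).
set ep := (ginv p, ginv v).
have h1 : oedge adj ep by rewrite /oedge /= ginv_adj.
have h2 : points_away adj o ep.
  by rewrite /points_away /= -!(g_d o) !ginvK.
have h3 : points_away adj (ginv o) ep by rewrite /points_away /= !ginv_d.
have := Hyp2 h1 h2 h3; rewrite /edge_act /= !ginvK => H.
have epre : end_preim g (fwd adj (p, v)) = fwd adj ep by rewrite /ep -{1}(ginvK p) -{1}(ginvK v) preim_fwd.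
rewrite epre /cv -/p.
have -> : d (g o) p = d o (ginv p) by rewrite -{1}(ginvK p) g_d.
rewrite expfzDr // -mulrA !exprnP in H *.
by rewrite mulrCA H mulrA -expfzDr // addNr expr0z mul1r.
Qed.


Lemma dir2 : forall A : set End, end_clopen A -> pi_z o z g nu A = nu A.
Proof.
move=> A hA.
have hex : exists t, lc_partition (cocycle adj o z g) A t.
  case: (decomp hA) => G [uG hG hGd eA].
  exists (existT _ (size G) (fun i : 'I_(size G) => Cyl (nth o G i), fun i : 'I_(size G) => cv (nth o G i))).
  split => /=.
  - move=> i; apply: cyl_clopen; have := (hG _ (mem_nth o (ltn_ord i))).1; rewrite /K0; lia.
  - move=> i j hij; apply: cyl_disj; first by apply: hGd; exact: mem_nth.
    by rewrite nth_uniq.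
  - move=> w; rewrite eA; split.
      case=> v [hv cw]; have hi : (index v G < size G)%N by rewrite index_mem.
      by exists (Ordinal hi) => /=; rewrite nth_index.
    by case=> i hw; exists (nth o G i); split => //; exact: mem_nth.
  - move=> i w hw; exact: ((loc _ (hG _ (mem_nth o (ltn_ord i))).1).1 w hw).
rewrite /pi_z.
case: (fa_integral_spec (fa_act g nu) hex) => n [P [c [[hP hdisj hcov hconst] ->]]].
simpl in hP, hdisj, hcov, hconst.
have eA : A = useq (index_enum 'I_n) P.
  apply/seteqP; split => w.
    by move/hcov => [i hi]; exists i; split => //; exact: mem_index_enum.
  by case=> i [_ hi]; apply/hcov; exists i.
rewrite eA (@FA_big _ (index_enum 'I_n) P (index_enum_uniq _)); last 2 first.
- by move=> i _.
- by move=> i j _ _; apply: hdisj.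
apply: eq_bigr => i _; rewrite /fa_act.
case: (decomp (hP i)) => G [uG hG hGd eP].
have ePre : end_preim g (P i) = useq G (fun v => end_preim g (Cyl v)).
  apply/seteqP; split => w.
    by move/preim_gend; rewrite eP => -[v [hv cw]]; exists v; split => //; apply/preim_gend.
  by case=> v [hv /preim_gend cw]; apply/preim_gend; rewrite eP; exists v.
have hcl : forall v, v \in G -> end_clopen (Cyl v).
  by move=> v hv; apply: cyl_clopen; have := (hG _ hv).1; rewrite /K0; lia.
have hdj : forall u v, u \in G -> v \in G -> u != v -> Cyl u `&` Cyl v = set0.
  by move=> u v hu hv huv; apply: cyl_disj => //; apply: hGd.
rewrite ePre eP (@FA_big _ G Cyl uG hcl hdj) (@FA_big _ G (fun v => end_preim g (Cyl v)) uG); last 2 first.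
- by move=> v hv; apply: preim_clopen; apply: hcl.
- by move=> u v hu hv huv; apply: preim_disj; apply: hdj.
rewrite mulr_sumr; apply: eq_big_seq => v hv.
case: (hG v hv) => hv1 hv2.
case: (loc _ hv1) => hc hl.
have hv0 : (0 < d o v)%N by move: hv1; rewrite /K0; lia.
case: (cyl_ne _ hv0) => w hw.
have -> : c i = cv v by rewrite -(hconst i w (hv2 _ hw)) hc.
exact: hl.
Qed.

End Tree.

Unset Implicit Arguments.
Local Close Scope nat_scope.
Local Open Scope ring_scope.

Theorem mainTheorem18 (V : eqType) (adj : rel V) (o : V)
  (Htree : is_tree adj) (Hlf : locally_finite adj) (Hleaf : no_leaves adj)
  (z : CC) (Hz : z != 0)
  (nu : set (End adj) -> CC) (Hnu : is_FA nu)
  (g ginv : V -> V) (Hg : is_aut adj g ginv) :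
  (forall A : set (End adj), end_clopen A -> pi_z o z g nu A = nu A) <->
  (forall e : V * V, oedge adj e -> points_away adj o e -> points_away adj (ginv o) e ->
     z ^+ gdist adj o e.1 * nu (fwd adj e)
     = z ^+ gdist adj o (edge_act g e).1 * nu (fwd adj (edge_act g e))).
Proof.
split.
  by move=> H e; apply: (dir1 Htree Hg Hnu Hz H).
by move=> H A hA; exact: (@dir2 V adj Htree o g ginv Hg nu Hnu z Hz Hleaf Hlf H A hA).
Qed.
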